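(* Let $A\in\mathbb{R}^{n\times n}$ be positive definite with $\operatorname{Tr}(A)=d_1>0$, and let $d_2>0$ be such that for every $x\in\mathbb{R}^n$ and every integer $1\le i\le n$ with $x_1+\cdots+x_i=1$ we have $x^TAx\ge 1/d_2$. Then for every $2$-wise independent family $\mathcal{H}$ from $[n]$ to $\{-1,1\}$, \[\mathbb{E}_{h\in\mathcal{H}}\left[\sup_{1\le i\le n}(h_1+\cdots+h_i)^2\right]\le d_1d_2.\]
   Context: A $k$-wise independent family from $[n]$ to $\{-1,1\}$ is a probability distribution $\mathcal{H}$ over functions $h:[n]\to\{-1,1\}$ such that for any $k$ distinct indices the values $h_{i_1},\dots,h_{i_k}$ (where $h_i:=h(i)$) are independent uniformly random signs; $h$ is viewed as the vector $(h_1,\dots,h_n)\in\mathbb{R}^n$. *)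

(* Defs.v *)
From HB Require Import structures.
From mathcomp Require Import all_boot all_order all_algebra.
Set Implicit Arguments. Unset Strict Implicit. Unset Printing Implicit Defensive.
Import Order.TTheory GRing.Theory Num.Theory.
Local Open Scope ring_scope.

(* A sign h_i in {-1,1} is encoded by a boolean: true |-> 1, false |-> -1. *)
Definition sgn {R : ringType} (b : bool) : R := if b then 1 else -1.

Definition is_distribution {R : realFieldType} (n : nat)
  (p : {ffun 'I_n -> bool} -> R) : Prop :=
  (forall h, 0 <= p h) /\ \sum_(h : {ffun 'I_n -> bool}) p h = 1.

Definition kwise_independent {R : realFieldType} (k n : nat)
  (p : {ffun 'I_n -> bool} -> R) : Prop :=
  is_distribution p /\
  forall (s : seq 'I_n) (a : 'I_n -> bool), uniq s -> size s = k ->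
    \sum_(h : {ffun 'I_n -> bool} | all (fun i => h i == a i) s) p h
      = (2 ^+ k)^-1.

Definition pos_def {R : realFieldType} (n : nat) (A : 'M[R]_n) : Prop :=
  A^T = A /\ forall x : 'cV[R]_n, x != 0 -> 0 < (x^T *m A *m x) 0 0.

(* prefix sum x_1 + ... + x_{i+1} (0-based index i) *)
Definition prefix_sum {R : ringType} (n : nat) (x : 'I_n -> R) (i : 'I_n) : R :=
  \sum_(j < n | (j <= i)%N) x j.

(* Main.v *)
Require Import Defs.
From HB Require Import structures.
From mathcomp Require Import all_boot all_order all_algebra.
From mathcomp Require Import ring.
Import Order.TTheory GRing.Theory Num.Theory.
Local Open Scope ring_scope.

Lemma qf_exp (R : realFieldType) (n : nat) (A : 'M[R]_n) (v : 'cV[R]_n) :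
  (v^T *m A *m v) 0 0 = \sum_k \sum_j v j 0 * A j k * v k 0.
Proof.
rewrite mxE; apply: eq_bigr => k _; rewrite mxE big_distrl /=.
by apply: eq_bigr => j _; rewrite mxE.
Qed.

Lemma qf_scale (R : realFieldType) (n : nat) (A : 'M[R]_n) (v : 'cV[R]_n) c :
  ((c *: v)^T *m A *m (c *: v)) 0 0 = c * c * (v^T *m A *m v) 0 0.
Proof.
rewrite !qf_exp mulr_sumr; apply: eq_bigr => k _; rewrite mulr_sumr.
by apply: eq_bigr => j _; rewrite !mxE; ring.
Qed.

Lemma qf_ge0 (R : realFieldType) (n : nat) (A : 'M[R]_n) (v : 'cV[R]_n) :
  pos_def A -> 0 <= (v^T *m A *m v) 0 0.
Proof.
move=> [_ hA]; have [->|nz] := eqVneq v 0.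
  by rewrite mulmx0 mxE.
exact: ltW (hA _ nz).
Qed.

Lemma sgn2 (R : realFieldType) (b : bool) : sgn b * sgn b = 1 :> R.
Proof. by case: b; rewrite /sgn ?mulr1 ?mulrNN ?mulr1. Qed.

Lemma pair_exp (R : realFieldType) n (p : {ffun 'I_n -> bool} -> R) (j k : 'I_n) :
  kwise_independent 2 p -> k != j ->
  \sum_h p h * (sgn (h j) * sgn (h k)) = 0.
Proof.
move=> [_ hk] kj.
have E : forall h : {ffun 'I_n -> bool}, p h * (sgn (h j) * sgn (h k)) =
  \sum_(b : bool) \sum_(c : bool)
     (if (h j == b) && (h k == c) then p h * (sgn b * sgn c) else 0).
  move=> h; rewrite !big_bool /=.
  by case: (h j); case: (h k); rewrite /= ?addr0 ?add0r.
rewrite (eq_bigr _ (fun h _ => E h)) exchange_big /=.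
rewrite (eq_bigr (fun b => \sum_(c : bool) (2 ^+ 2)^-1 * (sgn b * sgn c))).
  by rewrite !big_bool /= /sgn; ring.
move=> b _; rewrite exchange_big /=; apply: eq_bigr => c _.
rewrite -big_mkcond /= -mulr_suml.
have U : uniq [:: j; k] by rewrite /= inE eq_sym kj.
have := hk [:: j; k] (fun i => if i == j then b else c) U erefl.
rewrite /=.
under eq_bigl => h do rewrite eqxx (negbTE kj) andbT.
by move=> ->.
Qed.

Lemma diag_exp (R : realFieldType) n (p : {ffun 'I_n -> bool} -> R) (j : 'I_n) :
  kwise_independent 2 p ->
  \sum_h p h * (sgn (h j) * sgn (h j)) = 1.
Proof.
move=> [[_ hs] _]; rewrite -hs; apply: eq_bigr => h _.
by rewrite sgn2 mulr1.
Qed.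

Theorem lemma3p1 (R : realFieldType) (n : nat) (A : 'M[R]_n) (d1 d2 : R) :
  pos_def A -> \tr A = d1 -> 0 < d1 -> 0 < d2 ->
  (forall (x : 'cV[R]_n) (i : 'I_n),
      prefix_sum (fun j => x j 0) i = 1 -> d2^-1 <= (x^T *m A *m x) 0 0) ->
  forall p : {ffun 'I_n -> bool} -> R, kwise_independent 2 p ->
  \sum_(h : {ffun 'I_n -> bool})
     p h * \big[Num.max/0]_(i < n) (prefix_sum (fun j => sgn (h j)) i) ^+ 2
   <= d1 * d2.
Proof.
move=> hA htr hd1 hd2 hx p hp.
pose v (h : {ffun 'I_n -> bool}) : 'cV[R]_n := \col_j sgn (h j).
pose q h := ((v h)^T *m A *m v h) 0 0.
have bound : forall h : {ffun 'I_n -> bool}, \big[Num.max/0]_(i < n)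
     (prefix_sum (fun j => sgn (h j)) i) ^+ 2 <= d2 * q h.
  move=> h; have q0 : 0 <= q h by exact: qf_ge0.
  have c0 : 0 <= d2 * q h by rewrite mulr_ge0 // ltW.
  elim/big_ind: _ => //.
    by move=> x y hx' hy'; rewrite ge_max hx' hy'.
  move=> i _; set S := prefix_sum _ i.
  have [->|Snz] := eqVneq S 0; first by rewrite expr0n.
  have := hx (S^-1 *: v h) i.
  have -> : prefix_sum (fun j => (S^-1 *: v h) j 0) i = S^-1 * S.
    rewrite /prefix_sum /S /prefix_sum mulr_sumr; apply: eq_bigr => j _.
    by rewrite !mxE.
  rewrite mulVf // => /(_ erefl); rewrite qf_scale -/(q h).
  have S2 : 0 < S ^+ 2 by rewrite lt_def sqrf_eq0 Snz sqr_ge0.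
  rewrite -invfM -expr2 mulrC ler_pdivlMr // => H.
  have : d2 * (d2^-1 * S ^+ 2) <= d2 * q h by rewrite ler_wpM2l // ltW.
  by rewrite mulrA mulfV ?gt_eqF // mul1r.
apply: (@le_trans _ _ (\sum_h p h * (d2 * q h))).
  apply: ler_sum => h _; apply: ler_wpM2l; last exact: bound.
  by case: hp => [[h0 _] _].
have -> : \sum_h p h * (d2 * q h) = d2 * \sum_h p h * q h.
  by rewrite mulr_sumr; apply: eq_bigr => h _; ring.
rewrite mulrC; apply: ler_wpM2r; first exact: ltW.
have -> : \sum_h p h * q h = \sum_k \sum_j A j k * (\sum_h p h * (sgn (h j) * sgn (h k))).
  rewrite /q.
  under eq_bigr => h _ do rewrite qf_exp mulr_sumr.
  rewrite exchange_big /=; apply: eq_bigr => k _.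
  under eq_bigr => h _ do rewrite mulr_sumr.
  rewrite exchange_big /=; apply: eq_bigr => j _.
  rewrite mulr_sumr; apply: eq_bigr => h _; rewrite !mxE; ring.
rewrite -htr /mxtrace le_eqVlt; apply/orP; left; apply/eqP; apply: eq_bigr => k _.
rewrite (bigD1 k) //= diag_exp // mulr1 big1 ?addr0 // => j jk.
by rewrite pair_exp ?mulr0 // eq_sym.
Qed.
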